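(* There exists a unitary on $\mathbb{C}^2\otimes\mathbb{C}^2\otimes\mathbb{C}^2$ of the form $L_1\,C_1\,L_2\,C_2\,L_3\,C_3\,L_4$, where $L_1,\dots,L_4$ are local unitaries (each of the form $V\otimes W\otimes X$ with $V,W,X$ $2\times2$ unitaries) and $C_1,C_2,C_3$ are CNOT gates acting respectively on the qubit pairs $\{A,B\}$, $\{B,C\}$, $\{C,A\}$ (identity on the remaining qubit), whose Schmidt rank equals $7$.
   Context: $T=|0\rangle\langle0|\otimes I_2+|1\rangle\langle1|\otimes\sigma_1$ is the CNOT gate on two qubits (first control, second target), where $\sigma_1=\begin{bmatrix}0&1\\1&0\end{bmatrix}$. For a matrix $U$ on $\mathbb{C}^2\otimes\mathbb{C}^2\otimes\mathbb{C}^2$ (systems $A,B,C$), its Schmidt rank $\mathrm{sr}(U)$ is the least integer $r$ such that $U=\sum_{j=1}^r A_j\otimes B_j\otimes C_j$ with $A_j,B_j,C_j$ complex $2\times 2$ matrices (i.e. the tensor rank of $U$). *)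

(* Defs.v *)
From HB Require Import structures.
From mathcomp Require Import all_boot all_order all_algebra.
From mathcomp Require Import complex mxtens.
From mathcomp Require Import reals.
Set Implicit Arguments. Unset Strict Implicit. Unset Printing Implicit Defensive.
Import Order.TTheory GRing.Theory Num.Theory.
Local Open Scope ring_scope.

Section Qubits.
Variable R : realType.
Local Notation C := (R[i]).

Definition adj {m n} (A : 'M[C]_(m, n)) : 'M[C]_(n, m) := (map_mx (@Num.conj C) A)^T.

Definition unitary {n} (U : 'M[C]_n) : Prop := U *m adj U = 1%:M.

Definition P0 : 'M[C]_2 := \matrix_(i, j) (((i == 0 :> nat) && (j == 0 :> nat))%:R).
Definition P1 : 'M[C]_2 := \matrix_(i, j) (((i == 1 :> nat) && (j == 1 :> nat))%:R).
Definition I2 : 'M[C]_2 := 1%:M.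
Definition sigma1 : 'M[C]_2 := \matrix_(i, j) ((i != j)%:R).

Definition CNOT : 'M[C]_(2 * 2) := P0 *t I2 + P1 *t sigma1.

(* three-qubit system A (x) B (x) C, as 'M_(2*2*2) = ('M_2 *t 'M_2) *t 'M_2 *)
Definition tens3 (X Y Z : 'M[C]_2) : 'M[C]_(2 * 2 * 2) := (X *t Y) *t Z.

Definition CNOT_AB : 'M[C]_(2 * 2 * 2) := CNOT *t I2.
Definition CNOT_BC : 'M[C]_(2 * 2 * 2) := tens3 I2 P0 I2 + tens3 I2 P1 sigma1.
Definition CNOT_CA : 'M[C]_(2 * 2 * 2) := tens3 I2 I2 P0 + tens3 sigma1 I2 P1.

Definition local_unitary (L : 'M[C]_(2 * 2 * 2)) : Prop :=
  exists V W X : 'M[C]_2, [/\ unitary V, unitary W, unitary X & L = tens3 V W X].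

Definition has_tensor_decomp (U : 'M[C]_(2 * 2 * 2)) (r : nat) : Prop :=
  exists (A B D : 'I_r -> 'M[C]_2), U = \sum_(j < r) tens3 (A j) (B j) (D j).

Definition schmidt_rank_eq (U : 'M[C]_(2 * 2 * 2)) (r : nat) : Prop :=
  has_tensor_decomp U r /\ (forall s, (s < r)%N -> ~ has_tensor_decomp U s).

End Qubits.

(* Main.v *)
Require Import Defs.
From HB Require Import structures.
From mathcomp Require Import all_boot all_order all_algebra.
From mathcomp Require Import complex mxtens.
From mathcomp Require Import reals.
From mathcomp Require Import ring zify.
Set Implicit Arguments. Unset Strict Implicit. Unset Printing Implicit Defensive.
Import Order.TTheory GRing.Theory Num.Theory.
Local Open Scope ring_scope.

Section Abs.
Variable K : fieldType.

Definition tt (X Y Z : 'M[K]_2) := \tr (X *m Y *m Z).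
Definition pr (F X : 'M[K]_2) := \tr (F^T *m X).

Lemma sum2 (V : zmodType) (f : 'I_2 -> V) : \sum_(i < 2) f i = f 0 + f 1.
Proof. by rewrite !big_ord_recr big_ord0 /= add0r; congr (f _ + f _); apply: val_inj. Qed.

Lemma mul2E (A B : 'M[K]_2) i j : (A *m B) i j = A i 0 * B 0 j + A i 1 * B 1 j.
Proof. by rewrite mxE sum2. Qed.

Lemma tr2E (A : 'M[K]_2) : \tr A = A 0 0 + A 1 1.
Proof. by rewrite /mxtrace sum2. Qed.

Lemma prE F X : pr F X = F 0 0 * X 0 0 + F 1 0 * X 1 0 + F 0 1 * X 0 1 + F 1 1 * X 1 1.
Proof. rewrite /pr tr2E !mul2E !mxE. ring. Qed.

Lemma ttE X Y Z : tt X Y Z =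
  X 0 0 * Y 0 0 * Z 0 0 + X 0 0 * Y 0 1 * Z 1 0 + X 0 1 * Y 1 0 * Z 0 0 + X 0 1 * Y 1 1 * Z 1 0
+ X 1 0 * Y 0 0 * Z 0 1 + X 1 0 * Y 0 1 * Z 1 1 + X 1 1 * Y 1 0 * Z 0 1 + X 1 1 * Y 1 1 * Z 1 1.
Proof. rewrite /tt tr2E !mul2E. ring. Qed.

Lemma pr_sandwich F P Q X : pr F (P *m X *m Q) = pr (P^T *m F *m Q^T) X.
Proof.
rewrite /pr !trmx_mul !trmxK mulmxA mulmxA mxtrace_mulC !mulmxA. by [].
Qed.

Lemma tt_sandwich P Q X Y Z : P \in unitmx -> Q \in unitmx ->
  tt (P *m X *m Q) (invmx Q *m Y) (Z *m invmx P) = tt X Y Z.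
Proof.
move=> uP uQ; rewrite /tt.
have -> : P *m X *m Q *m (invmx Q *m Y) *m (Z *m invmx P) = P *m (X *m Y *m Z) *m invmx P.
  by rewrite !mulmxA -[P *m X *m Q *m invmx Q]mulmxA mulmxV // mulmx1.
by rewrite mxtrace_mulC [invmx P *m _]mulmxA mulVmx // mul1mx.
Qed.

Definition Dec n (F G H : 'I_n -> 'M[K]_2) :=
  forall X Y Z, tt X Y Z = \sum_(j < n) pr (F j) X * pr (G j) Y * pr (H j) Z.

Lemma Dec_sandwich n (F G H : 'I_n -> 'M[K]_2) P Q : Dec F G H -> P \in unitmx -> Q \in unitmx ->
  Dec (fun j => P^T *m F j *m Q^T) (fun j => (invmx Q)^T *m G j) (fun j => H j *m (invmx P)^T).
Proof.
move=> D uP uQ X Y Z; rewrite -(tt_sandwich X Y Z uP uQ) D.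
apply: eq_bigr => j _; rewrite pr_sandwich.
rewrite -[invmx Q *m Y]mulmx1 (pr_sandwich (G j)) trmx1 mulmx1.
rewrite -[Z *m invmx P]mul1mx mulmxA (pr_sandwich (H j)) trmx1 mul1mx //.
Qed.

End Abs.


Section Abs2.
Variable K : fieldType.

Lemma pr_sum (F X : 'M[K]_2) : pr F X = \sum_i \sum_j F i j * X i j.
Proof. by rewrite prE !sum2; ring. Qed.

Lemma prvec (F : 'M[K]_2) (u : 'rV_(2*2)) : pr F (vec_mx u) = \sum_k mxvec F 0 k * u 0 k.
Proof.
rewrite pr_sum (reindex _ (curry_mxvec_bij _ _)) /= pair_bigA /=.
by apply: eq_bigr => [[i j]] _ /=; rewrite mxvecE mxE.
Qed.

Lemma orth m (h : 'I_m -> 'M[K]_2) : (m <= 3)%N ->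
  exists Om : 'M[K]_2, Om != 0 /\ forall i, pr (h i) Om = 0.
Proof.
move=> hm.
pose A : 'M[K]_(2*2, m) := \matrix_(k, i) mxvec (h i) 0 k.
have rk : (0 < \rank (kermx A))%N.
  rewrite mxrank_ker; have := rank_leq_col A; rewrite subn_gt0. 
  by move=> h1; apply: (leq_ltn_trans h1); apply: (leq_ltn_trans hm).
have : kermx A != 0 by rewrite -mxrank_eq0 -lt0n.
move=> nz; case: (pickP (fun k => row k (kermx A) != 0)) => [k Hk | H0]; last first.
  move: nz; rewrite (_ : kermx A = 0) ?eqxx //.
  by apply/row_matrixP => k; move/negbFE/eqP: (H0 k) ->; rewrite row0.
exists (vec_mx (row k (kermx A))); split; first by rewrite vec_mx_eq0.
move=> i; rewrite prvec.
have := mulmx_ker A; move/matrixP/(_ k i).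
rewrite mxE [RHS]mxE => H; apply: (etrans _ H); apply: eq_bigr => l _; rewrite !mxE mulrC //.
Qed.

End Abs2.


Section Core.
Variable K : fieldType.
Local Notation E i j := (delta_mx i j : 'M[K]_2).

Lemma ord2 (i : 'I_2) : i = 0 \/ i = 1.
Proof. by case: i => [[|[|//]]] Hi; [left|right]; apply: val_inj. Qed.

Lemma prE1 (F : 'M[K]_2) i j : pr F (E i j) = F i j.
Proof.
by case: (ord2 i) => ->; case: (ord2 j) => ->; rewrite prE !mxE /=; ring.
Qed.

End Core.

Section Core2.
Variable K : fieldType.
Local Notation E i j := (delta_mx i j : 'M[K]_2).

Lemma prD (F X Y : 'M[K]_2) : pr F (X + Y) = pr F X + pr F Y.
Proof. rewrite !prE !mxE; ring. Qed.
Lemma prZ (F X : 'M[K]_2) a : pr F (a *: X) = a * pr F X.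
Proof. rewrite !prE !mxE; ring. Qed.

Lemma core n (F G H : 'I_n -> 'M[K]_2) j0 : Dec F G H -> (n <= 6)%N ->
  F j0 0 0 = 1 -> F j0 0 1 = 0 -> F j0 1 0 = 0 -> False.
Proof.
move=> D hn h00 h01 h10.
pose a j := pr (G j) (E 0 0); pose b j := pr (G j) (E 0 1).
have conc : forall s0 s1 : K, (forall j, j != j0 -> s0 * a j + s1 * b j = 0) ->
    s0 = 0 /\ s1 = 0.
  move=> s0 s1 hs; pose Y := s0 *: E 0 0 + s1 *: E 0 1.
  have hY : forall j, j != j0 -> pr (G j) Y = 0.
    by move=> j hj; rewrite prD !prZ; apply: hs.
  have z : forall Z, tt (E 1 0) Y Z = 0.
    move=> Z; rewrite D big1 // => j _; case: (eqVneq j j0) => [->|hj].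
      by rewrite prE1 h10 !mul0r.
    by rewrite hY // mulr0 mul0r.
  have e1 : tt (E 1 0) Y (E 0 1) = s0 by rewrite ttE !mxE /=; ring.
  have e2 : tt (E 1 0) Y (E 1 1) = s1 by rewrite ttE !mxE /=; ring.
  by rewrite -e1 -e2 !z.
have [j1 [hj10 hu1]] : exists j1, j1 != j0 /\ (a j1 != 0 \/ b j1 != 0).
  case: (pickP (fun j => (j != j0) && ((a j != 0) || (b j != 0)))) => [j /andP[h1 h2]|H0].
    by exists j; split=> //; case/orP: h2; [left|right].
  have [] := conc 1 0.
    move=> j hj; move: (H0 j); rewrite hj /= => /negbT/norP[/negbNE/eqP -> /negbNE/eqP ->].
    by rewrite mulr0 add0r mulr0.
  by move/eqP; rewrite oner_eq0.
pose d j := a j1 * b j - b j1 * a j.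
have [j2 [hj20 hd]] : exists j2, j2 != j0 /\ d j2 != 0.
  case: (pickP (fun j => (j != j0) && (d j != 0))) => [j /andP[h1 h2]|H0].
    by exists j.
  have [] := conc (- b j1) (a j1).
    move=> j hj; move: (H0 j); rewrite hj /= => /negbT/negbNE/eqP; rewrite /d => hz.
    by rewrite -hz; ring.
  by move=> /eqP; rewrite oppr_eq0 => /eqP hb ha; exfalso; case: hu1; rewrite ?ha ?hb eqxx.
have hj21 : j2 != j1 by apply/eqP => e; move: hd; rewrite e /d mulrC subrr eqxx.
pose P := [pred j | (j != j0) && (j != j1) && (j != j2)].
have cP : (#|P| <= 3)%N.
  have hc := cardC P; rewrite card_ord in hc.
  have sub : (j2 |: [set j0; j1]) \subset [predC P].
    apply/subsetP => j; rewrite !inE => /orP[/eqP->|/orP[/eqP->|/eqP->]];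
      by rewrite ?eqxx ?andbF.
  have c3 : #|j2 |: [set j0; j1]| = 3%N.
    rewrite cardsU1 cards2 !inE (negbTE hj21) (negbTE hj20) eq_sym hj10.
    by [].
  have := subset_leq_card sub; rewrite c3 => h3.
  have h6 : (#|P| + #|[predC P]| <= 6)%N by rewrite hc. 
  rewrite -(leq_add2r 3); apply: (leq_trans _ h6); rewrite leq_add2l; exact: h3.
have [Om [Omnz hOm']] := orth (fun i : 'I_#|P| => H (enum_val i)) cP.
have hOm : forall j, P j -> pr (H j) Om = 0.
  by move=> j hj; have := hOm' (enum_rank_in hj j); rewrite enum_rankK_in.
have van : forall X Y, pr (F j0) X = 0 -> pr (G j1) Y = 0 -> pr (G j2) Y = 0 ->
    tt X Y Om = 0.
  move=> X Y hX hY1 hY2; rewrite D big1 // => j _.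
  case: (eqVneq j j0) => [->|e0]; first by rewrite hX !mul0r.
  case: (eqVneq j j1) => [->|e1]; first by rewrite hY1 mulr0 mul0r.
  case: (eqVneq j j2) => [->|e2]; first by rewrite hY2 mulr0 mul0r.
  by rewrite hOm ?mulr0 //= e0 e1 e2.
have mkY : forall k : 'I_2, exists Y : 'M[K]_2,
    [/\ pr (G j1) Y = 0, pr (G j2) Y = 0, Y 1 0 = (E 1 k) 1 0 & Y 1 1 = (E 1 k) 1 1].
  move=> k; pose al1 := pr (G j1) (E 1 k); pose al2 := pr (G j2) (E 1 k).
  pose s0 := (al2 * b j1 - al1 * b j2) / d j2.
  pose s1 := (al1 * a j2 - al2 * a j1) / d j2.
  exists (s0 *: E 0 0 + s1 *: E 0 1 + E 1 k); split.
  - rewrite !prD !prZ -/(a j1) -/(b j1) -/al1 /s0 /s1; move: hd; rewrite /d => hd'.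
    by field.
  - rewrite !prD !prZ -/(a j2) -/(b j2) -/al2 /s0 /s1; move: hd; rewrite /d => hd'.
    by field.
  - by rewrite !mxE /=; ring.
  - by rewrite !mxE /=; ring.
have hX1 : pr (F j0) (E 0 1) = 0 by rewrite prE1.
have c0 : forall k : 'I_2, Om k 0 = 0.
  move=> k; have [Y [y1 y2 y10 y11]] := mkY k.
  have := van _ _ hX1 y1 y2; rewrite ttE !mxE /= y10 y11 !mxE.
  by case: (ord2 k) => -> /=; move=> h; rewrite -h; ring.
pose X2 := E 1 1 - F j0 1 1 *: E 0 0.
have hX2 : pr (F j0) X2 = 0 by rewrite prE !mxE /= h00 h01 h10; ring.
have c1 : forall k : 'I_2, Om k 1 = 0.
  move=> k; have [Y [y1 y2 y10 y11]] := mkY k.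
  have := van _ _ hX2 y1 y2; rewrite ttE !mxE /= y10 y11 !mxE !c0.
  by case: (ord2 k) => -> /=; move=> h; rewrite -h; ring.
move: Omnz; rewrite (_ : Om = 0) ?eqxx //; apply/matrixP => i j.
by rewrite mxE; case: (ord2 j) => ->; [apply: c0 | apply: c1].
Qed.

End Core2.

Section LB.
Variable K : fieldType.
Local Notation E i j := (delta_mx i j : 'M[K]_2).

Lemma LB n (F G H : 'I_n -> 'M[K]_2) : Dec F G H -> (n <= 6)%N -> False.
Proof.
move=> D hn.
case: (pickP (fun j => F j != 0)) => [j0 hj0 | H0]; last first.
  have := D (E 0 0) (E 0 0) (E 0 0); rewrite big1.
    by rewrite ttE !mxE /=; move/eqP; rewrite !mulr1 !mulr0 !addr0 oner_eq0.
  by move=> j _; move/negbT/negbNE/eqP: (H0 j) => ->; rewrite /pr trmx0 mul0mx mxtrace0 !mul0r.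
pose L := col_ebase (F j0); pose U := row_ebase (F j0).
have uP : (invmx L)^T \in unitmx by rewrite unitmx_tr unitmx_inv col_ebase_unit.
have uQ : (invmx U)^T \in unitmx by rewrite unitmx_tr unitmx_inv row_ebase_unit.
have D' := Dec_sandwich D uP uQ.
have e : (invmx L)^T^T *m F j0 *m (invmx U)^T^T = pid_mx (\rank (F j0)).
  rewrite !trmxK -{1}(mulmx_ebase (F j0)) -/L -/U.
  rewrite !mulmxA mulVmx ?col_ebase_unit // mul1mx -mulmxA mulmxV ?row_ebase_unit //.
  by rewrite mulmx1.
have r0 : (0 < \rank (F j0))%N by rewrite lt0n mxrank_eq0.
apply: (core (j0 := j0) D' hn); rewrite e mxE //=.
by rewrite r0.
Qed.

End LB.


Section Tens.
Variable K : comPzRingType.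

Lemma tensmxDl m n p q (A A' : 'M[K]_(m,n)) (B : 'M[K]_(p,q)) :
  (A + A') *t B = A *t B + A' *t B.
Proof. by apply/matrixP => i j; rewrite !mxE mulrDl. Qed.

Lemma tr_tens m n (A : 'M[K]_m) (B : 'M[K]_n) : \tr (A *t B) = \tr A * \tr B.
Proof.
rewrite /mxtrace mulr_suml.
rewrite (eq_bigr (fun i => \sum_j A i i * B j j)) => [|i _]; last by rewrite mulr_sumr.
rewrite pair_bigA /= (reindex (@mxtens_index m n)); last first.
  by apply: onW_bij; exists (@mxtens_unindex m n); [apply: mxtens_indexK | apply: mxtens_unindexK].
by apply: eq_bigr => [[i j]] _; rewrite tensmxE.
Qed.

Lemma tens11 m n : (1%:M : 'M[K]_m) *t (1%:M : 'M[K]_n) = 1%:M.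
Proof.
apply/matrixP => i j; case: (mxtens_indexP i) => i1 i2; case: (mxtens_indexP j) => j1 j2.
rewrite tensmxE !mxE (can_eq (@mxtens_indexK m n)) xpair_eqE.
by case: (i1 == j1); case: (i2 == j2); rewrite /= ?mulr1n ?mulr0n ?mulr1 ?mulr0.
Qed.

End Tens.

Section Conc.
Variable R : realType.
Local Notation C := (R[i]).

Lemma tens3_mul (A B D A' B' D' : 'M[C]_2) :
  tens3 A B D *m tens3 A' B' D' = tens3 (A *m A') (B *m B') (D *m D').
Proof. by rewrite /tens3 !tensmx_mul. Qed.

Definition kap (M : 'M[C]_(2*2*2)) (P1 P2 P3 : 'M[C]_2) := \tr (M *m tens3 P1 P2 P3).

Lemma kap_tens A B D P1 P2 P3 :
  kap (tens3 A B D) P1 P2 P3 = \tr (A *m P1) * \tr (B *m P2) * \tr (D *m P3).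
Proof. by rewrite /kap tens3_mul /tens3 !tr_tens. Qed.

Lemma kap_sum I (r : seq I) (P : pred I) (M : I -> 'M[C]_(2*2*2)) P1 P2 P3 :
  kap (\sum_(j <- r | P j) M j) P1 P2 P3 = \sum_(j <- r | P j) kap (M j) P1 P2 P3.
Proof. by rewrite /kap mulmx_suml raddf_sum. Qed.

Lemma kapD M N P1 P2 P3 : kap (M + N) P1 P2 P3 = kap M P1 P2 P3 + kap N P1 P2 P3.
Proof. by rewrite /kap mulmxDl mxtraceD. Qed.

Definition Pm (a : 'I_2) : 'M[C]_2 := if a == 0 then P0 R else P1 R.
Definition Sg (a : 'I_2) : 'M[C]_2 := if a == 0 then I2 R else sigma1 R.

Lemma AB_E : CNOT_AB R = \sum_(a < 2) tens3 (Pm a) (Sg a) (I2 R).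
Proof. by rewrite sum2 /CNOT_AB /CNOT tensmxDl. Qed.
Lemma BC_E : CNOT_BC R = \sum_(b < 2) tens3 (I2 R) (Pm b) (Sg b).
Proof. by rewrite sum2. Qed.
Lemma CA_E : CNOT_CA R = \sum_(c < 2) tens3 (Sg c) (I2 R) (Pm c).
Proof. by rewrite sum2. Qed.

Definition U0 := CNOT_AB R *m CNOT_BC R *m CNOT_CA R.

Lemma U0E : U0 = \sum_(a < 2) \sum_(b < 2) \sum_(c < 2)
   tens3 (Pm a *m Sg c) (Sg a *m Pm b) (Sg b *m Pm c).
Proof.
rewrite /U0 AB_E BC_E CA_E mulmx_suml mulmx_suml; apply: eq_bigr => a _.
rewrite [tens3 _ _ _ *m _]mulmx_sumr mulmx_suml; apply: eq_bigr => b _.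
rewrite mulmx_sumr; apply: eq_bigr => c _.
by rewrite !tens3_mul /I2 !mulmx1 !mul1mx.
Qed.


Definition Phi1 (Z : 'M[C]_2) : 'M[C]_2 := \matrix_(p, q) (if p == q then Z 0 q else Z 1 q).
Definition Phi2 (X : 'M[C]_2) : 'M[C]_2 := \matrix_(p, q) (if p == q then X 0 p else X 1 p).

Lemma trA (a c : 'I_2) Z : \tr (Pm a *m Sg c *m Phi1 Z) = Z c a.
Proof.
by case: (ord2 a) => ->; case: (ord2 c) => ->; rewrite /Pm /Sg /= tr2E !mul2E !mxE /=; ring.
Qed.

Lemma trB (a b : 'I_2) X : \tr (Sg a *m Pm b *m Phi2 X) = X a b.
Proof.
by case: (ord2 a) => ->; case: (ord2 b) => ->; rewrite /Pm /Sg /= tr2E !mul2E !mxE /=; ring.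
Qed.

Lemma kapU0 X Y Z : kap U0 (Phi1 Z) (Phi2 X) (Phi2 Y) = tt X Y Z.
Proof.
rewrite U0E kap_sum.
rewrite (eq_bigr (fun a => \sum_(b < 2) \sum_(c < 2) Z c a * X a b * Y b c)); last first.
  move=> a _; rewrite kap_sum; apply: eq_bigr => b _; rewrite kap_sum; apply: eq_bigr => c _.
  by rewrite kap_tens trA !trB.
rewrite ttE !sum2; ring.
Qed.


Definition rep1 (B : 'M[C]_2) := \matrix_(p, q) \tr (B *m Phi1 (delta_mx p q)).
Definition rep2 (B : 'M[C]_2) := \matrix_(p, q) \tr (B *m Phi2 (delta_mx p q)).

Lemma rep1E B Z : pr (rep1 B) Z = \tr (B *m Phi1 Z).
Proof. rewrite prE !mxE !tr2E !mul2E !mxE /=; ring. Qed.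
Lemma rep2E B Z : pr (rep2 B) Z = \tr (B *m Phi2 Z).
Proof. rewrite prE !mxE !tr2E !mul2E !mxE /=; ring. Qed.

Lemma no_dec s : (s < 7)%N -> ~ has_tensor_decomp U0 s.
Proof.
move=> hs [A [B [D hU]]].
apply: (@LB _ s (fun j => rep2 (B j)) (fun j => rep2 (D j)) (fun j => rep1 (A j))) => //.
move=> X Y Z; rewrite -kapU0 hU kap_sum; apply: eq_bigr => j _.
by rewrite kap_tens rep1E !rep2E; ring.
Qed.


Lemma mxaddE (M N : 'M[C]_2) i j : (M + N) i j = M i j + N i j.
Proof. by rewrite mxE. Qed.
Lemma mxoppE (M : 'M[C]_2) i j : (- M) i j = - M i j.
Proof. by rewrite !mxE. Qed.
Lemma mx8addE (M N : 'M[C]_(2*2*2)) i j : (M + N) i j = M i j + N i j.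
Proof. by rewrite mxE. Qed.
Lemma tens3E (A B D : 'M[C]_2) i1 i2 i3 k1 k2 k3 :
  tens3 A B D (mxtens_index (mxtens_index (i1, i2), i3)) (mxtens_index (mxtens_index (k1, k2), k3))
  = A i1 k1 * B i2 k2 * D i3 k3.
Proof. by rewrite /tens3 !tensmxE. Qed.

Section Strassen.
Variables (x y z : 'I_2 -> 'I_2 -> 'M[C]_2).
Definition Xs (k : 'I_7) : 'M[C]_2 := nth 0 [:: x 0 0 + x 1 1; x 1 0 + x 1 1; x 0 0; x 1 1;
  x 0 0 + x 0 1; x 1 0 - x 0 0; x 0 1 - x 1 1] k.
Definition Ys (k : 'I_7) : 'M[C]_2 := nth 0 [:: y 0 0 + y 1 1; y 0 0; y 0 1 - y 1 1; y 1 0 - y 0 0;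
  y 1 1; y 0 0 + y 0 1; y 1 0 + y 1 1] k.
Definition Zs (k : 'I_7) : 'M[C]_2 := nth 0 [:: z 0 0 + z 1 1; z 0 1 - z 1 1; z 1 0 + z 1 1;
  z 0 0 + z 0 1; z 1 0 - z 0 0; z 1 1; z 0 0] k.

Lemma strassen : \sum_(a < 2) \sum_(b < 2) \sum_(c < 2) tens3 (z c a) (x a b) (y b c)
  = \sum_(k < 7) tens3 (Zs k) (Xs k) (Ys k).
Proof.
apply/matrixP => i j.
case: (mxtens_indexP i) => i12 i3; case: (mxtens_indexP i12) => i1 i2.
case: (mxtens_indexP j) => j12 j3; case: (mxtens_indexP j12) => j1 j2.
rewrite !sum2 !big_ord_recl big_ord0 addr0 /Xs /Ys /Zs /=.
rewrite !mx8addE !tens3E !mxaddE !mxoppE.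
ring.
Qed.
End Strassen.


Lemma has7 : has_tensor_decomp U0 7.
Proof.
exists (Zs (fun c a => Pm a *m Sg c)), (Xs (fun a b => Sg a *m Pm b)), (Ys (fun b c => Sg b *m Pm c)).
by rewrite U0E -strassen.
Qed.

Lemma unitary1 : unitary (I2 R).
Proof.
rewrite /unitary /adj /I2; apply/matrixP => i j.
rewrite mul1mx !mxE [j == i]eq_sym; case: (i == j); rewrite /= ?mulr1n ?mulr0n ?conjC1 ?conjC0 //.
Qed.

Lemma lu1 : local_unitary (1%:M : 'M[C]_(2*2*2)).
Proof.
exists (I2 R), (I2 R), (I2 R); split; try exact: unitary1.
by rewrite /tens3 /I2 !tens11.
Qed.

End Conc.

Theorem theorem7 (R : realType) :
  exists L1 L2 L3 L4 : 'M[R[i]]_(2 * 2 * 2),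
    [/\ local_unitary L1, local_unitary L2, local_unitary L3, local_unitary L4 &
      schmidt_rank_eq
        (L1 *m CNOT_AB R *m L2 *m CNOT_BC R *m L3 *m CNOT_CA R *m L4) 7].
Proof.
exists 1%:M, 1%:M, 1%:M, 1%:M; split; try exact: lu1.
rewrite !mulmx1 !mul1mx; split; first exact: has7.
by move=> s hs; apply: no_dec.
Qed.
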